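(* If $U$ is a unicyclic graph, then every nontrivial 2-switch between two edges of $\operatorname{Cycles}(U)$ is a p-switch over $U$.
   Context: Graphs are finite, simple, undirected, labeled. A unicyclic graph is a connected graph with exactly one cycle; a pseudoforest is a graph each of whose components is a tree or a unicyclic graph. For vertices $a,b,c,d$, $A=\binom{a\ b}{c\ d}$ is interchangeable in $G$ if $ab,cd\in E(G)$, $\{a,b\}\cap\{c,d\}=\varnothing$, $ac,bd\notin E(G)$; the 2-switch $\tau_A$ sends $G$ to $G-ab-cd+ac+bd$ if $A$ is interchangeable and to $G$ otherwise (trivial); a 2-switch between edges $ab,cd$ is $\tau_A$ with $A=\binom{a\ b}{c\ d}$. A nontrivial 2-switch $\tau$ over a pseudoforest $G$ is a p-switch if $\tau(G)$ is a pseudoforest. $\operatorname{Cycles}(H)$ is the subgraph induced by vertices lying on some cycle of $H$. *)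

(* Defs.v *)
(* Graphs on a finite vertex type T are symmetric irreflexive
   boolean relations G : rel T (finite, simple, undirected, labeled). *)
From mathcomp Require Import all_boot.
Set Implicit Arguments. Unset Strict Implicit. Unset Printing Implicit Defensive.

Section Graphs.
Variable T : finType.

Definition edges (G : rel T) : {set {set T}} :=
  [set [set p.1; p.2] | p in [set p : T * T | G p.1 p.2]].

Definition restrict (G : rel T) (S : {set T}) : rel T :=
  fun x y => [&& x \in S, y \in S & G x y].

Definition is_cycle (G : rel T) (F : {set {set T}}) : Prop :=
  [/\ F \subset edges G, F != set0,
      forall v, v \in cover F -> #|[set e in F | v \in e]| = 2
    & forall u v, u \in cover F -> v \in cover F ->
        connect (fun x y => [set x; y] \in F) u v].

Definition connected_on (G : rel T) (S : {set T}) : Prop :=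
  S != set0 /\ forall x y, x \in S -> y \in S -> connect (restrict G S) x y.

Definition tree_on (G : rel T) (S : {set T}) : Prop :=
  connected_on G S /\ forall F, ~ is_cycle (restrict G S) F.

Definition unicyclic_on (G : rel T) (S : {set T}) : Prop :=
  connected_on G S /\
  exists F, is_cycle (restrict G S) F /\
            forall F', is_cycle (restrict G S) F' -> F' = F.

Definition unicyclic (G : rel T) : Prop := unicyclic_on G setT.

Definition component (G : rel T) (x : T) : {set T} := [set y | connect G x y].

Definition pseudoforest (G : rel T) : Prop :=
  forall x, tree_on G (component G x) \/ unicyclic_on G (component G x).

(* v lies on some cycle of G, i.e. v is a vertex of Cycles(G) *)
Definition on_cycle (G : rel T) (v : T) : Prop :=
  exists F, is_cycle G F /\ v \in cover F.

Definition upair (x y a b : T) : bool :=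
  ((x == a) && (y == b)) || ((x == b) && (y == a)).

Definition interchangeable (G : rel T) (a b c d : T) : bool :=
  [&& G a b, G c d, a != c, a != d, b != c, b != d, ~~ G a c & ~~ G b d].

Definition two_switch (G : rel T) (a b c d : T) : rel T :=
  fun x y =>
    if interchangeable G a b c d then
      (G x y && ~~ (upair x y a b || upair x y c d)) || upair x y a c || upair x y b d
    else G x y.

Definition p_switch (G : rel T) (a b c d : T) : Prop :=
  [/\ pseudoforest G, interchangeable G a b c d & pseudoforest (two_switch G a b c d)].

End Graphs.

(* Main.v *)
From Stdlib Require Import Classical FunctionalExtensionality.
Require Import Defs.
From mathcomp Require Import all_boot zify.
Set Implicit Arguments. Unset Strict Implicit. Unset Printing Implicit Defensive.


Section Aux.
Variable T : finType.
Implicit Types (G : rel T) (K F : {set {set T}}).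

Definition deg K (v : T) := #|[set e in K | v \in e]|.
Definition even K := forall v, ~~ odd (deg K v).
Definition symd K F : {set {set T}} := (K :\: F) :|: (F :\: K).

Lemma odd_card_symd (X : finType) (A B : {set X}) :
  odd #|(A :\: B) :|: (B :\: A)| = odd #|A| (+) odd #|B|.
Proof.
rewrite cardsU.
have -> : (A :\: B) :&: (B :\: A) = set0.
  by apply/setP => x; rewrite !inE; case: (x \in A); case: (x \in B).
rewrite cards0 subn0 !cardsD oddD.
rewrite !oddB ?subset_leq_card ?subsetIl // setIC.
by case: (odd #|A|); case: (odd #|B|); case: (odd #|B :&: A|).
Qed.

Lemma deg_symd A B v : odd (deg (symd A B) v) = odd (deg A v) (+) odd (deg B v).
Proof.
rewrite /deg -odd_card_symd; congr (odd #|pred_of_set _|).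
apply/setP => e; rewrite !inE.
by case: (e \in A); case: (e \in B); case: (v \in e).
Qed.

Lemma deg_set1 f v : deg [set f] v = (v \in f).
Proof.
rewrite /deg; case: (boolP (v \in f)) => h.
  rewrite (_ : [set e in [set f] | v \in e] = [set f]) ?cards1 //.
  by apply/setP => e; rewrite !inE; case: eqP => // ->.
rewrite (_ : [set e in [set f] | v \in e] = set0) ?cards0 //.
by apply/setP => e; rewrite !inE; case: eqP => // ->; rewrite (negbTE h).
Qed.

Lemma deg_edge x y v : x != y ->
  odd (deg [set [set x; y]] v) = (v == x) (+) (v == y).
Proof.
move=> xy; rewrite deg_set1 !inE.
by case: eqP => [->|]; [rewrite (negbTE xy) | case: eqP].
Qed.

Lemma set2_eq (x y a b : T) : [set x; y] = [set a; b] ->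
  upair x y a b.
Proof.
move/setP => H; move: (H x) (H y) (H a) (H b); rewrite /upair !inE !eqxx /=.
by do ![case: eqP => //= ?; subst] => //; rewrite ?eqxx ?orbT.
Qed.

Lemma upair_set2 (x y a b : T) : upair x y a b -> [set x; y] = [set a; b].
Proof.
by case/orP => /andP[/eqP -> /eqP ->] //; rewrite setUC.
Qed.

Lemma in_edges G x y : symmetric G -> ([set x; y] \in edges G) = G x y.
Proof.
move=> Gs; apply/imsetP/idP.
  case=> [[p1 p2]]; rewrite inE /= => Gp E.
  by case/orP: (set2_eq E) => /andP[/eqP -> /eqP ->]; rewrite // Gs.
by move=> Gxy; exists (x, y); rewrite ?inE.
Qed.

Lemma edgesP G f : f \in edges G -> exists x y, f = [set x; y] /\ G x y.
Proof. by case/imsetP => [[x y]]; rewrite inE /= => Gxy ->; exists x, y. Qed.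

Lemma symdC A B : symd A B = symd B A.
Proof. by rewrite /symd setUC. Qed.

Lemma symd0 A B : symd A B = set0 -> A = B.
Proof.
move/setP => H; apply/setP => e; move: (H e); rewrite !inE.
by case: (e \in A); case: (e \in B).
Qed.


Lemma deg0 v : deg set0 v = 0.
Proof.
rewrite /deg (_ : [set e in (set0 : {set {set T}}) | v \in e] = set0) ?cards0 //.
by apply/setP => e; rewrite !inE.
Qed.

Variable H : rel T.
Hypotheses (Hs : symmetric H) (Hi : irreflexive H).

Lemma edge_neq x y : [set x; y] \in edges H -> x != y.
Proof. by rewrite in_edges //; apply: contraTneq => ->; rewrite Hi. Qed.

Fixpoint wset (x : T) (p : seq T) : {set {set T}} :=
  if p is y :: p' then symd [set [set x; y]] (wset y p') else set0.

Lemma wsetP F x p : F \subset edges H ->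
  path (fun u v => [set u; v] \in F) x p ->
  wset x p \subset F /\
  forall v, odd (deg (wset x p) v) = (v == x) (+) (v == last x p).
Proof.
move=> FE; elim: p x => [|y p IH] x /=.
  by move=> _; split; [exact: sub0set | move=> v; rewrite deg0 addbb].
case/andP=> exy pp; have [sub par] := IH y pp; split.
  apply/subsetP => f; rewrite !inE => /orP[/andP[_ /eqP->] | /andP[_ h]] //.
  exact: (subsetP sub).
move=> v; rewrite deg_symd deg_edge ?par; last exact: edge_neq (subsetP FE _ exy).
by case: (v == x); case: (v == y); case: (v == last y p).
Qed.

Lemma cover_in F v : (v \in cover F) = [exists f in F, v \in f].
Proof.
apply/bigcupP/existsP => [[f fF vf]|[f /andP[fF vf]]]; exists f => //.
by rewrite fF.
Qed.

Lemma cycle_even F : is_cycle H F -> even F.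
Proof.
case=> _ _ Hdeg _ v; case: (boolP (v \in cover F)) => vc.
  by rewrite /deg Hdeg.
rewrite /deg (_ : [set e in F | v \in e] = set0) ?cards0 //.
apply/setP => f; rewrite !inE; apply/negP => /andP[fF vf].
by move: vc; rewrite cover_in => /existsP; apply; exists f; rewrite fF.
Qed.

Section FindCycle.
Variable K : {set {set T}}.
Hypotheses (KE : K \subset edges H) (Kev : even K).
Let e x y := [set x; y] \in K.

Lemma e_sym : symmetric e.
Proof. by move=> x y; rewrite /e setUC. Qed.

Lemma e_neq x y : e x y -> x != y.
Proof. by move=> h; apply: edge_neq; apply: (subsetP KE). Qed.

Lemma e_other x y : e x y -> exists z, e x z /\ z != y.
Proof.
move=> exy.
set A := [set f in K | x \in f].
have fA : [set x; y] \in A by rewrite inE; apply/andP; split => //; rewrite !inE eqxx.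
have : 0 < #|A :\ [set x; y]|.
  have := Kev x; rewrite /deg -/A (cardsD1 [set x; y] A) fA /=.
  by case: #|A :\ [set x; y]|.
case/card_gt0P => g; rewrite !inE => /andP[gne /andP[gK xg]].
have [p1 [p2 [Eg _]]] := edgesP (subsetP KE _ gK).
move: xg gK gne; rewrite Eg !inE => /orP[] /eqP <- gK gne.
  by exists p2; split => //; apply: contraNneq gne => ->.
exists p1; rewrite /e setUC; split => //; apply: contraNneq gne => ->.
by rewrite setUC.
Qed.

Lemma path_step x q : q != [::] -> uniq (x :: q) -> path e x q ->
  (exists s, [/\ uniq s, 2 < size s & cycle e s]) \/
  (exists z, z \notin x :: q /\ e z x).
Proof.
case: q => [//|h q'] _ Hu Hp.
have exh : e x h by case/andP: Hp.
have [z [exz zh]] := e_other exh.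
case: (boolP (z \in x :: h :: q')) => zin; last first.
  by right; exists z; split => //; rewrite e_sym.
left.
have zq : z \in h :: q'.
  by move: zin; rewrite in_cons eq_sym (negbTE (e_neq exz)).
have [q1 [q2 Eq]] : exists q1 q2, h :: q' = q1 ++ z :: q2.
  by case/splitPr: zq => q1 q2; exists q1, q2.
rewrite Eq in Hu Hp.
have nq1 : q1 != [::].
  by apply/eqP => E1; move: Eq; rewrite E1 /= => -[E2 _]; rewrite E2 eqxx in zh.
exists (x :: rcons q1 z); split.
- move: Hu; rewrite -cat_rcons /= mem_cat cat_uniq negb_or.
  by case/andP=> /andP[-> _] /andP[-> _].
- by rewrite /= size_rcons; case: q1 nq1 {Eq Hu Hp}.
- rewrite /cycle rcons_path last_rcons rcons_path; apply/andP; split.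
    by move: Hp; rewrite cat_path => /andP[-> /= /andP[-> _]].
  by rewrite e_sym.
Qed.

Lemma find_cycle : K != set0 -> exists s, [/\ uniq s, 2 < size s & cycle e s].
Proof.
case/set0Pn => f fK.
have [x [y [Ef _]]] := edgesP (subsetP KE _ fK).
have exy : e x y by rewrite /e -Ef.
suff : forall k x q, #|T| - size (x :: q) <= k -> q != [::] ->
         uniq (x :: q) -> path e x q ->
         exists s, [/\ uniq s, 2 < size s & cycle e s].
  move/(_ #|T| x [:: y]); apply => //; first exact: leq_subr.
    by rewrite /= inE andbT (e_neq exy).
  by rewrite /= exy.
elim=> [|k IH] x0 q Hk Hq Hu Hp; case: (path_step Hq Hu Hp) => // -[z [zn ezx]].
  have : uniq (z :: x0 :: q) by rewrite cons_uniq zn Hu.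
  move/card_uniqP => Ec; have := max_card (mem (z :: x0 :: q)).
  rewrite Ec /=; move: Hk => /=; lia.
apply: (IH z (x0 :: q)).
- by move: Hk => /=; lia.
- by [].
- by rewrite cons_uniq zn Hu.
- by rewrite /= ezx Hp.
Qed.

Section SeqCycle.
Variable s : seq T.
Hypotheses (Hu : uniq s) (Hsz : 2 < size s) (Hc : cycle e s).
Let F := [set [set x; next s x] | x in s].

Lemma FK : F \subset K.
Proof. by apply/subsetP => f /imsetP [x xs ->]; apply: next_cycle Hc xs. Qed.

Lemma next_neq x : x \in s -> next s x != x.
Proof. by move=> xs; rewrite eq_sym; apply: e_neq; apply: next_cycle Hc xs. Qed.

Lemma next2 x : x \in s -> next s (next s x) != x.
Proof.
move=> xs; have [i s' E] := rot_to xs.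
have Nr := next_rot i Hu.
rewrite -!Nr E.
have : uniq (x :: s') by rewrite -E rot_uniq.
have : 2 < size (x :: s') by rewrite -E size_rot.
case: s' {E} => [|y [|z r]] //= _.
rewrite !inE negb_or => /andP[/andP[xy xzr] /andP[yzr _]].
move: xzr yzr; rewrite !negb_or => /andP[xz _] /andP[yz _].
have yx : (y == x) = false by rewrite eq_sym (negbTE xy).
by rewrite eqxx yx eqxx eq_sym.
Qed.

Lemma F_cycle : is_cycle H F.
Proof.
have sF x : x \in s -> [set x; next s x] \in F by move=> xs; apply: imset_f.
have coverS v : v \in cover F -> v \in s.
  rewrite cover_in => /existsP[f /andP[/imsetP[x xs ->]]].
  by rewrite !inE => /orP[] /eqP ->; rewrite ?mem_next.
split.
- exact: subset_trans FK KE.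
- case: s Hsz sF => [//|x s'] _ sF; apply/set0Pn; exists [set x; next (x :: s') x].
  by apply: sF; rewrite mem_head.
- move=> v /coverS vs.
  have -> : [set f in F | v \in f] = [set [set v; next s v]; [set prev s v; v]].
    apply/setP => f; rewrite !inE; apply/andP/orP.
      case=> /imsetP[x xs ->]; rewrite !inE => /orP[] /eqP E.
        by left; rewrite E.
      by right; rewrite E (prev_next Hu).
    case=> /eqP ->; rewrite !inE eqxx ?orbT; split => //; first exact: sF.
    have := sF (prev s v); rewrite (next_prev Hu) mem_prev; exact.
  rewrite cards2; congr (_.+1); apply/eqP; rewrite eqb1.
  apply/eqP => /set2_eq; rewrite /upair eqxx /= => /orP[/andP[_ /eqP E]|/eqP E].
    by move: (next_neq vs); rewrite E eqxx.
  by move: (next2 vs); rewrite E (next_prev Hu) eqxx.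
- move=> u v /coverS us /coverS vs.
  have : fconnect (next s) u v by rewrite (fconnect_cycle (cycle_next Hu) us).
  apply: connect_sub => x y /eqP <-.
  case: (boolP (x \in s)) => xs; first by apply: connect1; apply: sF.
  by rewrite next_nth (negbTE xs).
Qed.

End SeqCycle.

Lemma even_cycle : K != set0 -> exists F, F \subset K /\ is_cycle H F.
Proof.
move=> /find_cycle [s [Hu Hsz Hc]].
by exists [set [set x; next s x] | x in s]; split; [apply: FK | apply: F_cycle].
Qed.

End FindCycle.
End Aux.


Section Uni.
Variable T : finType.
Variable U : rel T.
Hypotheses (Us : symmetric U) (Ui : irreflexive U).
Variable C : {set {set T}}.
Hypothesis Ccyc : is_cycle U C.
Hypothesis Cuniq : forall F, is_cycle U F -> F = C.
Implicit Types (K F P J : {set {set T}}) (x y p q : T).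

Lemma CE : C \subset edges U.
Proof. by case: Ccyc. Qed.

Lemma ker K : K \subset edges U -> even K -> K = set0 \/ K = C.
Proof.
move=> KE Kev; case: (eqVneq K set0) => [->|Kn]; [by left | right].
have [F [FK Fc]] := even_cycle Us Ui KE Kev Kn.
have CK : C \subset K by rewrite -(Cuniq Fc).
have E' : even (symd K C).
  by move=> v; rewrite deg_symd (negbTE (Kev v)) (negbTE (cycle_even Ccyc v)).
have SE : symd K C \subset edges U.
  apply/subsetP => f; rewrite /symd !inE => /orP[] /andP[_ h].
    exact: (subsetP KE).
  exact: (subsetP CE).
case: (eqVneq (symd K C) set0) => [/symd0 //|Sn].
have [F' [F'S F'c]] := even_cycle Us Ui SE E' Sn.
rewrite (Cuniq F'c) in F'S.
case: Ccyc => _ /set0Pn [f fC] _ _.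
by have := subsetP F'S f fC; rewrite /symd !inE fC (subsetP CK f fC).
Qed.

Lemma chord x y : x \in cover C -> y \in cover C -> U x y -> [set x; y] \in C.
Proof.
move=> xc yc Uxy; case: (boolP ([set x; y] \in C)) => // nC.
have [_ _ _ Cconn] := Ccyc.
have xy : x != y by apply: contraTneq Uxy => ->; rewrite Ui.
case/connectP: (Cconn x y xc yc) => p pp Ey.
have [WC Wpar] := wsetP Us Ui CE pp.
set W := wset x p in WC Wpar.
set K := symd W [set [set x; y]].
have KE : K \subset edges U.
  apply/subsetP => f; rewrite /K /symd !inE => /orP[] /andP[_ h].
    exact: (subsetP CE) (subsetP WC _ h).
  by rewrite (eqP h) in_edges.
have Kev : even K.
  move=> v; rewrite deg_symd Wpar -Ey deg_edge //.
  by case: (v == x); case: (v == y).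
have : [set x; y] \in K.
  rewrite /K /symd !inE eqxx andbT; apply/orP; right.
  by apply: contra nC => /(subsetP WC).
by case: (ker KE Kev) => ->; [rewrite inE | rewrite (negbTE nC)].
Qed.

Lemma on_cycleC v : on_cycle U v -> v \in cover C.
Proof. by case=> F [Fc vF]; rewrite -(Cuniq Fc). Qed.

Lemma upair_sym x y p q : upair y x p q = upair x y p q.
Proof.
by rewrite /upair; case: (x == p); case: (y == q); case: (x == q); case: (y == p).
Qed.

Lemma upair_swap x y p q : upair x y q p = upair x y p q.
Proof. by rewrite /upair orbC. Qed.

Section Switch.
Variables a b c d : T.
Hypothesis Hint : interchangeable U a b c d.
Hypotheses (Cab : [set a; b] \in C) (Ccd : [set c; d] \in C).

Definition U0 x y := U x y && ~~ (upair x y a b || upair x y c d).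
Notation G := (two_switch U a b c d).

Lemma hUab : U a b. Proof. by case/andP: Hint. Qed.
Lemma hUcd : U c d. Proof. by case/and3P: Hint. Qed.
Lemma hac : a != c. Proof. by case/and4P: Hint. Qed.
Lemma had : a != d. Proof. by case/and5P: Hint. Qed.
Lemma hbc : b != c.
Proof. by move: Hint; rewrite /interchangeable => /and5P[_ _ _ _ /andP[]]. Qed.
Lemma hbd : b != d.
Proof. by move: Hint; rewrite /interchangeable => /and5P[_ _ _ _ /and3P[]]. Qed.
Lemma hnac : ~~ U a c.
Proof. by move: Hint; rewrite /interchangeable => /and5P[_ _ _ _ /and4P[]]. Qed.
Lemma hnbd : ~~ U b d.
Proof. by move: Hint; rewrite /interchangeable => /and5P[_ _ _ _ /and4P[]]. Qed.
Lemma hab : a != b. Proof. by apply: contraTneq hUab => ->; rewrite Ui. Qed.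
Lemma hcd : c != d. Proof. by apply: contraTneq hUcd => ->; rewrite Ui. Qed.

Lemma GE x y : G x y = U0 x y || upair x y a c || upair x y b d.
Proof. by rewrite /two_switch Hint. Qed.

Lemma U0s : symmetric U0.
Proof. by move=> x y; rewrite /U0 Us !(upair_sym x y). Qed.

Lemma upair_diag x p q : p != q -> upair x x p q = false.
Proof.
move=> pq; rewrite /upair; apply/negbTE/negP => /orP[] /andP[/eqP E1 /eqP E2];
  by move: pq; rewrite -E1 -E2 eqxx.
Qed.

Lemma U0i : irreflexive U0.
Proof. by move=> x; rewrite /U0 Ui. Qed.

Lemma Gs : symmetric G.
Proof. by move=> x y; rewrite !GE U0s !(upair_sym x y). Qed.

Lemma Gi : irreflexive G.
Proof. by move=> x; rewrite GE U0i !upair_diag // ?hac ?hbd. Qed.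

Lemma edgesU0 f : f \in edges U0 ->
  [/\ f \in edges U, f != [set a; b] & f != [set c; d]].
Proof.
case/edgesP => x [y [-> U0xy]]; move: U0xy; rewrite /U0 => /andP[Uxy].
rewrite negb_or => /andP[nab ncd]; split; first by rewrite in_edges.
  by apply: contra nab => /eqP /set2_eq.
by apply: contra ncd => /eqP /set2_eq.
Qed.

Lemma U0_sub_U : edges U0 \subset edges U.
Proof. by apply/subsetP => f /edgesU0 []. Qed.

Lemma edgesG f : f \in edges G -> f != [set a; c] -> f != [set b; d] ->
  f \in edges U0.
Proof.
case/edgesP => x [y [-> Gxy]] nac nbd; rewrite in_edges; last exact: U0s.
move: Gxy; rewrite GE => /orP[/orP[//|/upair_set2 E]|/upair_set2 E].
  by rewrite E eqxx in nac.
by rewrite E eqxx in nbd.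
Qed.

Lemma noU0even K : K \subset edges U0 -> even K -> K = set0.
Proof.
move=> KU0 Kev; have KE : K \subset edges U := subset_trans KU0 U0_sub_U.
case: (ker KE Kev) => // KC; rewrite KC in KU0.
by have [_ /eqP] := edgesU0 (subsetP KU0 _ Cab).
Qed.

Lemma bad_gen p q r s K0 : [set p; q] \in C -> [set r; s] \in C ->
  [set r; s] != [set p; q] -> [set p; q] \notin edges U0 ->
  [set r; s] \notin edges U0 -> p != q ->
  K0 \subset edges U0 -> (forall v, odd (deg K0 v) = (v == p) (+) (v == q)) ->
  False.
Proof.
move=> Cpq Crs rspq npq nrs pq K0U par.
set K := symd K0 [set [set p; q]].
have KE : K \subset edges U.
  apply/subsetP => f; rewrite /K /symd !inE => /orP[] /andP[_ h].
    exact: (subsetP U0_sub_U) (subsetP K0U _ h).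
  by rewrite (eqP h); apply: (subsetP CE).
have Kev : even K.
  move=> v; rewrite deg_symd par deg_edge //.
  by case: (v == p); case: (v == q).
have pqK : [set p; q] \in K.
  rewrite /K /symd !inE eqxx andbT; apply/orP; right.
  by apply: contra npq => /(subsetP K0U).
case: (ker KE Kev) => KC; first by rewrite KC inE in pqK.
have : [set r; s] \in K by rewrite KC.
rewrite /K /symd !inE (negbTE rspq) /= => /orP[h|]; last by rewrite andbF.
by move: nrs; rewrite (subsetP K0U _ h).
Qed.

Lemma eab_ecd : [set c; d] != [set a; b].
Proof.
apply/negP => /eqP /set2_eq; rewrite /upair => /orP[] /andP[/eqP E _].
  by move: hac; rewrite E eqxx.
by move: hbc; rewrite E eqxx.
Qed.

Lemma nab_U0 : [set a; b] \notin edges U0.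
Proof. by apply/negP => /edgesU0 [_ /eqP]. Qed.
Lemma ncd_U0 : [set c; d] \notin edges U0.
Proof. by apply/negP => /edgesU0 [_ _ /eqP]. Qed.

Lemma bad_ab K0 : K0 \subset edges U0 ->
  (forall v, odd (deg K0 v) = (v == a) (+) (v == b)) -> False.
Proof. apply: bad_gen Cab Ccd eab_ecd nab_U0 ncd_U0 hab. Qed.

Lemma bad_cd K0 : K0 \subset edges U0 ->
  (forall v, odd (deg K0 v) = (v == c) (+) (v == d)) -> False.
Proof. by apply: bad_gen Ccd Cab _ ncd_U0 nab_U0 hcd; rewrite eq_sym eab_ecd. Qed.

Lemma join x y : connect U0 x y -> exists P,
  P \subset edges U0 /\ forall v, odd (deg P v) = (v == x) (+) (v == y).
Proof.
case/connectP => p pp ->; exists (wset x p).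
apply: (wsetP U0s U0i (subxx _)).
by apply: sub_path pp => u v; rewrite in_edges //; exact: U0s.
Qed.

Lemma symd_sub K1 K2 (S : {set {set T}}) : K1 \subset S -> K2 \subset S ->
  symd K1 K2 \subset S.
Proof.
move=> /subsetP h1 /subsetP h2; apply/subsetP => f.
by rewrite /symd !inE => /orP[] /andP[_ h]; [apply: h1 | apply: h2].
Qed.

Lemma key1 F1 : is_cycle G F1 -> [set a; c] \in F1 -> [set b; d] \notin F1 ->
  ~ connect G a b.
Proof.
move=> F1c acF bdF.
have F1E : F1 \subset edges G by case: F1c.
set J := symd F1 [set [set a; c]].
have JU0 : J \subset edges U0.
  apply/subsetP => f; rewrite /J /symd !inE => /orP[] /andP[fne fF].
    apply: edgesG; first exact: (subsetP F1E).
      by [].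
    by apply: contraNneq bdF => <-.
  by rewrite (eqP fF) acF in fne.
have Jpar v : odd (deg J v) = (v == a) (+) (v == c).
  by rewrite deg_symd (negbTE (cycle_even F1c v)) deg_edge // hac.
set S := [set w | connect U0 a w || connect U0 c w].
have bS : b \notin S.
  rewrite inE negb_or; apply/andP; split; apply/negP => /join [P [PU Ppar]].
    by apply: (bad_ab PU).
  apply: (bad_ab (symd_sub JU0 PU)) => v.
  by rewrite deg_symd Jpar Ppar; case: (v == a); case: (v == b); case: (v == c).
have dS : d \notin S.
  rewrite inE negb_or; apply/andP; split; apply/negP => /join [P [PU Ppar]].
    apply: (bad_cd (symd_sub JU0 PU)) => v.
    by rewrite deg_symd Jpar Ppar; case: (v == a); case: (v == d); case: (v == c).
  by apply: (bad_cd PU).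
have Scl x y : x \in S -> G x y -> y \in S.
  move=> xS; rewrite GE => /orP[/orP[U0xy|]|].
  - move: xS; rewrite !inE => /orP[] h; apply/orP; [left|right];
      exact: connect_trans h (connect1 U0xy).
  - by rewrite /upair => /orP[] /andP[_ /eqP ->]; rewrite inE connect0 ?orbT.
  - by rewrite /upair => /orP[] /andP[/eqP E _]; move: xS; rewrite E;
      [rewrite (negbTE bS) | rewrite (negbTE dS)].
case/connectP => p pp Eb.
have Hl : forall x (q : seq T), x \in S -> path G x q -> last x q \in S.
  move=> x q; elim: q x => [|y q IH] x //= xS /andP[Gxy qq].
  exact: IH (Scl _ _ xS Gxy) qq.
have : last a p \in S by apply: Hl pp; rewrite inE connect0.
by rewrite -Eb (negbTE bS).
Qed.


Lemma uniq_type F1 F2 : is_cycle G F1 -> is_cycle G F2 ->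
  ([set a; c] \in F1) = ([set a; c] \in F2) ->
  ([set b; d] \in F1) = ([set b; d] \in F2) -> F1 = F2.
Proof.
move=> F1c F2c E1 E2.
have F1E : F1 \subset edges G by case: F1c.
have F2E : F2 \subset edges G by case: F2c.
have Sev : even (symd F1 F2).
  by move=> v; rewrite deg_symd (negbTE (cycle_even F1c v)) (negbTE (cycle_even F2c v)).
apply: symd0; apply: noU0even Sev.
apply/subsetP => f; rewrite /symd !inE => /orP[] /andP[nf f1].
- apply: edgesG; first exact: (subsetP F1E).
    by apply: contraNneq nf => Ef; rewrite Ef -E1 -Ef.
  by apply: contraNneq nf => Ef; rewrite Ef -E2 -Ef.
- apply: edgesG; first exact: (subsetP F2E).
    by apply: contraNneq nf => Ef; rewrite Ef E1 -Ef.
  by apply: contraNneq nf => Ef; rewrite Ef E2 -Ef.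
Qed.

Lemma no_type0 F : is_cycle G F -> [set a; c] \notin F -> [set b; d] \notin F ->
  False.
Proof.
move=> Fc nac nbd.
have FE : F \subset edges G by case: Fc.
have FU0 : F \subset edges U0.
  apply/subsetP => f fF; apply: edgesG; first exact: (subsetP FE).
    by apply: contraNneq nac => <-.
  by apply: contraNneq nbd => <-.
have := noU0even FU0 (cycle_even Fc).
by case: Fc => _ /eqP.
Qed.

Lemma cyc_conn F x y : is_cycle G F -> x \in cover F -> y \in cover F ->
  connect G x y.
Proof.
case=> FE _ _ Fconn xF yF; apply: connect_sub (Fconn x y xF yF) => u v h.
by apply: connect1; rewrite -in_edges; [exact: (subsetP FE) | exact: Gs].
Qed.

Lemma in_cover F x y : [set x; y] \in F -> (x \in cover F) && (y \in cover F).
Proof.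
by move=> h; rewrite !cover_in; apply/andP; split; apply/existsP; exists [set x; y];
  rewrite h !inE eqxx ?orbT.
Qed.

End Switch.

Lemma switch_swap a b c d : interchangeable U a b c d ->
  two_switch U b a d c = two_switch U a b c d.
Proof.
move=> Hint.
have Hint' : interchangeable U b a d c.
  move: (Hint); rewrite /interchangeable => /and5P[h1 h2 h3 h4 /and4P[h5 h6 h7 h8]].
  by rewrite (Us b a) (Us d c) h1 h2 h3 h4 h5 h6 h7 h8.
apply: functional_extensionality => x; apply: functional_extensionality => y.
rewrite /two_switch Hint Hint' (upair_swap x y a b) (upair_swap x y c d).
by case: (upair x y a c); case: (upair x y b d); rewrite ?orbT ?orbF.
Qed.

Lemma G_pair a b c d : interchangeable U a b c d ->
  [set a; b] \in C -> [set c; d] \in C ->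
  forall F1 F2 u v, is_cycle (two_switch U a b c d) F1 ->
  is_cycle (two_switch U a b c d) F2 ->
  u \in cover F1 -> v \in cover F2 -> connect (two_switch U a b c d) u v ->
  F1 = F2.
Proof.
move=> Hint Cab Ccd F1 F2 u v F1c F2c uF1 vF2 uv.
have cs := sym_connect_sym (Gs Hint).
have conn_all x y : x \in cover F1 :|: cover F2 -> y \in cover F1 :|: cover F2 ->
    connect (two_switch U a b c d) x y.
  rewrite !inE => /orP[] xF /orP[] yF.
  - exact (cyc_conn Hint F1c xF yF).
  - exact (connect_trans (cyc_conn Hint F1c xF uF1) (connect_trans uv (cyc_conn Hint F2c vF2 yF))).
  - rewrite cs; exact (connect_trans (cyc_conn Hint F1c yF uF1) (connect_trans uv (cyc_conn Hint F2c vF2 xF))).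
  - exact (cyc_conn Hint F2c xF yF).
have coverA : ([set a; c] \in F1) || ([set a; c] \in F2) -> a \in cover F1 :|: cover F2.
  by rewrite inE => /orP[] /in_cover /andP[-> _]; rewrite ?orbT.
have coverB : ([set b; d] \in F1) || ([set b; d] \in F2) -> b \in cover F1 :|: cover F2.
  by rewrite inE => /orP[] /in_cover /andP[-> _]; rewrite ?orbT.
have k1 := key1 Hint Cab Ccd.
have Hint' : interchangeable U b a d c.
  move: (Hint); rewrite /interchangeable => /and5P[h1 h2 h3 h4 /and4P[h5 h6 h7 h8]].
  by rewrite (Us b a) (Us d c) h1 h2 h3 h4 h5 h6 h7 h8.
have k2 := key1 Hint'.
rewrite switch_swap // in k2.
have {}k2 := k2 (ltac:(by rewrite setUC)) (ltac:(by rewrite setUC)).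
case A1: ([set a; c] \in F1); case B1: ([set b; d] \in F1);
case A2: ([set a; c] \in F2); case B2: ([set b; d] \in F2);
first [ by apply: (uniq_type Hint Cab F1c F2c); rewrite ?A1 ?A2 ?B1 ?B2
      | by exfalso; apply: (no_type0 Hint Cab F1c); rewrite ?A1 ?B1
      | by exfalso; apply: (no_type0 Hint Cab F2c); rewrite ?A2 ?B2
      | by exfalso; apply: (k1 F1 F1c); rewrite ?A1 ?B1 //; apply: conn_all;
          [apply: coverA | apply: coverB]; rewrite ?A1 ?A2 ?B1 ?B2 ?orbT
      | by exfalso; apply: (k1 F2 F2c); rewrite ?A2 ?B2 //; apply: conn_all;
          [apply: coverA | apply: coverB]; rewrite ?A1 ?A2 ?B1 ?B2 ?orbT
      | by exfalso; apply: (k2 F1 F1c); rewrite ?A1 ?B1 //; apply: conn_all;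
          [apply: coverB | apply: coverA]; rewrite ?A1 ?A2 ?B1 ?B2 ?orbT
      | by exfalso; apply: (k2 F2 F2c); rewrite ?A2 ?B2 //; apply: conn_all;
          [apply: coverB | apply: coverA]; rewrite ?A1 ?A2 ?B1 ?B2 ?orbT ].
Qed.

End Uni.


Section PFsec.
Variable T : finType.
Variable G : rel T.
Hypothesis Gsym : symmetric G.
Implicit Types (F : {set {set T}}).

Lemma restrict_path (S : {set T}) x p :
  (forall y z, y \in S -> G y z -> z \in S) -> x \in S -> path G x p ->
  path (restrict G S) x p.
Proof.
move=> Scl; elim: p x => [|y p IH] x //= xS /andP[Gxy pp].
have yS := Scl _ _ xS Gxy.
by rewrite /restrict xS yS Gxy /=; apply: IH.
Qed.

Lemma PF : (forall F1 F2 u v, is_cycle G F1 -> is_cycle G F2 ->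
    u \in cover F1 -> v \in cover F2 -> connect G u v -> F1 = F2) ->
  pseudoforest G.
Proof.
move=> Hp x; set S := component G x.
have cs := sym_connect_sym Gsym.
have Scl y z : y \in S -> G y z -> z \in S.
  by rewrite !inE => h Gyz; exact: connect_trans h (connect1 Gyz).
have Sconn y z : y \in S -> z \in S -> connect G y z.
  by rewrite !inE => hy hz; rewrite cs in hy; exact: connect_trans hy hz.
have conn : connected_on G S.
  split; first by apply/set0Pn; exists x; rewrite inE connect0.
  move=> y z yS zS; case/connectP: (Sconn y z yS zS) => p pp ->.
  by apply/connectP; exists p => //; apply: restrict_path.
have cyc F : is_cycle (restrict G S) F ->
    is_cycle G F /\ forall v, v \in cover F -> v \in S.
  case=> FE Fn Fd Fc.
  have sub : edges (restrict G S) \subset edges G.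
    apply/subsetP => f /edgesP [p1 [p2 [-> /and3P[_ _ h]]]].
    by rewrite in_edges.
  split; first by split; [exact: subset_trans FE sub | | |].
  move=> v; rewrite cover_in => /existsP[f /andP[fF vf]].
  have [p1 [p2 [Ef /and3P[p1S p2S _]]]] := edgesP (subsetP FE _ fF).
  by move: vf; rewrite Ef => /set2P[] ->.
have cov0 F : is_cycle G F -> exists v, v \in cover F.
  case=> FE /set0Pn[f fF] _ _.
  have [p1 [p2 [Ef _]]] := edgesP (subsetP FE _ fF).
  exists p1; rewrite cover_in; apply/existsP; exists f.
  by rewrite fF Ef !inE eqxx.
case: (classic (exists F, is_cycle (restrict G S) F)) => [[F0 F0c]|nF].
  right; split => //; exists F0; split => // F' F'c.
  have [F'G F'S] := cyc F' F'c; have [F0G F0S] := cyc F0 F0c.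
  have [u uF'] := cov0 _ F'G; have [v vF0] := cov0 _ F0G.
  by apply: (Hp F' F0 u v) => //; apply: Sconn; [apply: F'S | apply: F0S].
by left; split => // F hF; apply: nF; exists F.
Qed.

End PFsec.

Lemma restrictT (T : finType) (G : rel T) : restrict G setT = G.
Proof.
apply: functional_extensionality => x; apply: functional_extensionality => y.
by rewrite /restrict !inE.
Qed.

Theorem lemma4p4 (T : finType) (U : rel T)
  (Usym : symmetric U) (Uirr : irreflexive U) (a b c d : T) :
  unicyclic U ->
  (* ab and cd are edges of Cycles(U) *)
  U a b -> on_cycle U a -> on_cycle U b ->
  U c d -> on_cycle U c -> on_cycle U d ->
  (* the 2-switch is nontrivial *)
  interchangeable U a b c d ->
  p_switch U a b c d.
Proof.
move=> Uu Uab aC bC Ucd cC dC Hint.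
move: Uu; rewrite /unicyclic /unicyclic_on restrictT => -[_ [C [Cc Cu]]].
have Cab : [set a; b] \in C.
  by apply: (chord Usym Uirr Cc Cu) => //; apply: (on_cycleC Cu).
have Ccd : [set c; d] \in C.
  by apply: (chord Usym Uirr Cc Cu) => //; apply: (on_cycleC Cu).
split => //.
  apply: PF => // F1 F2 u v F1c F2c _ _ _.
  by rewrite (Cu _ F1c) (Cu _ F2c).
apply: PF; first exact: (Gs Usym Hint).
exact: (G_pair Usym Uirr Cc Cu Hint Cab Ccd).
Qed.
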